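(* Let $\phi$ be a character (unital algebra homomorphism to $\mathbb K$) of the block-substitution bialgebra $\mathbf{B}$ of noncrossing partitions. Then $\phi$ is invertible in the monoid of characters of $\mathbf{B}$ under convolution if and only if $\phi(I_n)\neq0$ for all $n\geq1$, where $I_n=\{[n]\}$.
   Context: $\mathbb K$ is a field of characteristic zero. Noncrossing partitions of $[n]$: no $a<c<b<d$ with $a,b$ in one block and $c,d$ in another; partitions of finite linearly ordered sets are identified with partitions of $[m]$ via the order-preserving bijection; $P_{|X}$ is the induced partition on $X$. $\mathbf{B}$ is the free commutative unital algebra generated by nonempty noncrossing partitions. For noncrossing $P\leq Q$ of $[n]$ (each block of $Q$ a union of blocks of $P$), $Q=\{\tau_1,\dots,\tau_l\}$, put $P/Q=P_{|\tau_1}\cdots P_{|\tau_l}$. The coproduct is $\delta(P)=\sum_{Q\geq P\text{ noncrossing}}Q\otimes P/Q$, extended multiplicatively; counit $\varepsilon(P)=1$ if $P$ has one block and $0$ otherwise. The convolution of characters is $\phi*\psi=m_{\mathbb K}\circ(\phi\otimes\psi)\circ\delta$, with unit $\varepsilon$. *)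

(* Defs.v *)
From HB Require Import structures.
From mathcomp Require Import all_boot all_order all_algebra.
Set Implicit Arguments. Unset Strict Implicit. Unset Printing Implicit Defensive.
Import GRing.Theory.
Local Open Scope ring_scope.

(* A set partition of [n] = {0,...,n-1} is encoded as P : {set {set 'I_n}}
   satisfying [partition P [set: 'I_n]] (blocks nonempty, disjoint, covering). *)

Definition noncrossing n (P : {set {set 'I_n}}) : bool :=
  [forall A in P, forall B in P, (A != B) ==>
     [forall a in A, forall b in A, forall c in B, forall d in B,
        ~~ [&& (a < c)%N, (c < b)%N & (b < d)%N]]].

Definition NCpart n (P : {set {set 'I_n}}) : bool :=
  partition P [set: 'I_n] && noncrossing P.

Definition refines n (P Q : {set {set 'I_n}}) : bool :=
  [forall B in P, exists C in Q, B \subset C].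

(* Induced partition P_{|tau}, transported to [#|tau|] via the
   order-preserving bijection 'I_#|tau| -> tau, k |-> k-th element of the
   increasingly enumerated set tau (enum_val). *)
Definition restrict n (P : {set {set 'I_n}}) (tau : {set 'I_n})
  : {set {set 'I_#|tau|}} :=
  [set [set k : 'I_#|tau| | @enum_val _ (mem tau) k \in B] | B : {set 'I_n} in P & B \subset tau].

(* A character of the free commutative algebra B is determined by its
   (arbitrary) values on the free generators, the nonempty noncrossing
   partitions; we represent it by such a value function (values on
   non-noncrossing sets or on n = 0 are irrelevant). *)
Definition charB (K : fieldType) := forall n : nat, {set {set 'I_n}} -> K.

(* Convolution: (phi * psi)(P) = sum_{Q >= P noncrossing} phi(Q) psi(P/Q),
   with psi(P/Q) = prod_{tau in Q} psi(P_{|tau}) by multiplicativity. *)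
Definition convB (K : fieldType) (phi psi : charB K) : charB K :=
  fun n P => \sum_(Q : {set {set 'I_n}} | NCpart Q && refines P Q)
               phi n Q * \prod_(tau in Q) psi #|tau| (restrict P tau).

Definition epsB (K : fieldType) : charB K :=
  fun n P => if #|P| == 1%N then 1 else 0.

(* Equality of characters = equality on all generators. *)
Definition eqB (K : fieldType) (phi psi : charB K) : Prop :=
  forall n (P : {set {set 'I_n}}), (0 < n)%N -> NCpart P -> phi n P = psi n P.

Definition invertibleB (K : fieldType) (phi : charB K) : Prop :=
  exists psi : charB K, eqB (convB phi psi) (@epsB K) /\ eqB (convB psi phi) (@epsB K).

(* Main.v *)
Require Import Defs.
From mathcomp Require Import all_boot all_order all_algebra.
Set Implicit Arguments. Unset Strict Implicit. Unset Printing Implicit Defensive.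

Lemma enum_sorted n (A : {pred 'I_n}) : sorted ltn (map val (enum A)).
Proof.
rewrite sorted_map /enum_mem.
apply: sorted_filter; first by move=> x y z /= ; apply: ltn_trans.
have := iota_ltn_sorted 0 n; rewrite -val_enum_ord sorted_map.
by rewrite /enum_mem filter_predT.
Qed.

Lemma enum_val_lt n (A : {pred 'I_n}) (i j : 'I_#|A|) :
  (i < j)%N -> (@enum_val _ A i < @enum_val _ A j)%N.
Proof.
move=> ij.
have x0 : 'I_n := enum_val i.
rewrite !(enum_val_nth x0) -!(nth_map x0 0%N) ?size_enum_card //.
have := @sorted_ltn_nth _ ltn ltn_trans 0%N _ (enum_sorted A) i j.
rewrite !inE size_map -cardE; apply => //.
all: by rewrite -cardE.
Qed.

Lemma enum_val_mono n (A : {pred 'I_n}) (i j : 'I_#|A|) :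
  (@enum_val _ A i < @enum_val _ A j)%N = (i < j)%N.
Proof.
case: (ltngtP i j) => h.
- by rewrite enum_val_lt.
- by apply/negbTE; rewrite -leqNgt ltnW // enum_val_lt.
- by rewrite (val_inj h) !ltnn.
Qed.

Definition pullg m n (g : 'I_m -> 'I_n) (P : {set {set 'I_n}}) : {set {set 'I_m}} :=
  [set [set k | g k \in B] | B : {set 'I_n} in P & B \subset [set g k | k in [set: 'I_m]]].

Lemma enum_val_image n (A : {set 'I_n}) :
  [set @enum_val _ (mem A) k | k in [set: 'I_#|A|]] = A.
Proof.
apply/setP => x; apply/imsetP/idP => [[k _ ->]|Ax]; first exact: enum_valP.
by exists (enum_rank_in Ax x); rewrite ?inE // enum_rankK_in.
Qed.

Lemma restrictE n (P : {set {set 'I_n}}) (tau : {set 'I_n}) :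
  restrict P tau = pullg (@enum_val _ (mem tau)) P.
Proof. by rewrite /restrict /pullg enum_val_image. Qed.

Definition monog m n (g : 'I_m -> 'I_n) := forall i j, (g i < g j)%N = (i < j)%N.

Lemma monog_inj m n (g : 'I_m -> 'I_n) : monog g -> injective g.
Proof.
move=> mg i j e; apply: val_inj; case: (ltngtP i j) => // h.
- by move: h; rewrite -mg e ltnn.
- by move: h; rewrite -mg e ltnn.
Qed.

Lemma monog_enum_val n (A : {set 'I_n}) : monog (@enum_val _ (mem A)).
Proof. by move=> i j; rewrite enum_val_mono. Qed.

Lemma monog_comp m n k (g1 : 'I_m -> 'I_n) (g2 : 'I_k -> 'I_m) :
  monog g1 -> monog g2 -> monog (g1 \o g2).
Proof. by move=> h1 h2 i j /=; rewrite h1 h2. Qed.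

Lemma mono_eq m n (g1 g2 : 'I_m -> 'I_n) : monog g1 -> monog g2 ->
  [set g1 k | k in [set: 'I_m]] = [set g2 k | k in [set: 'I_m]] -> g1 =1 g2.
Proof.
move=> h1 h2 eim.
suff H : forall k (i : 'I_m), val i = k -> g1 i = g2 i by move=> i; exact: H.
elim/ltn_ind => k IH i ik.
case: (ltngtP (g1 i) (g2 i)) => h; last exact: val_inj.
- have : g1 i \in [set g2 k | k in [set: 'I_m]] by rewrite -eim imset_f ?inE.
  case/imsetP => j _ ej.
  have ji : (j < i)%N by rewrite -h2 -ej.
  have jk : (j < k)%N by rewrite -ik.
  have := IH j jk j erefl; rewrite -ej => /(monog_inj h1) eji.
  by move: ji; rewrite eji ltnn.
- have : g2 i \in [set g1 k | k in [set: 'I_m]] by rewrite eim imset_f ?inE.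
  case/imsetP => j _ ej.
  have ji : (j < i)%N by rewrite -h1 -ej.
  have jk : (j < k)%N by rewrite -ik.
  have := IH j jk j erefl; rewrite -ej => /(monog_inj h2) eji.
  by move: ji; rewrite eji ltnn.
Qed.

Lemma card_image_mono m n (g : 'I_m -> 'I_n) : monog g ->
  #|[set g k | k in [set: 'I_m]]| = m.
Proof. by move=> mg; rewrite card_imset ?cardsT ?card_ord //; exact: monog_inj. Qed.

Lemma pull_canon (T : Type) (c : forall n, {set {set 'I_n}} -> T) n m1 m2
  (g1 : 'I_m1 -> 'I_n) (g2 : 'I_m2 -> 'I_n) (P : {set {set 'I_n}}) :
  monog g1 -> monog g2 ->
  [set g1 k | k in [set: 'I_m1]] = [set g2 k | k in [set: 'I_m2]] ->
  c m1 (pullg g1 P) = c m2 (pullg g2 P).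
Proof.
move=> h1 h2 eim.
have e : m1 = m2 by rewrite -(card_image_mono h1) -(card_image_mono h2) eim.
subst m2.
have eg := mono_eq h1 h2 eim.
congr (c m1 _); rewrite /pullg eim; apply: eq_imset => B.
by apply/setP => k; rewrite !inE eg.
Qed.

Lemma pull_comp m n k (g1 : 'I_m -> 'I_n) (g2 : 'I_k -> 'I_m) P :
  injective g1 ->
  pullg g2 (pullg g1 P) = pullg (g1 \o g2) P.
Proof.
move=> ig1; apply/setP => Y; apply/imsetP/imsetP.
- case=> B'; rewrite inE => /andP [/imsetP [B] ] .
  rewrite inE => /andP [BP Bsub] -> B'sub ->.
  exists B; last by apply/setP => z; rewrite !inE.
  rewrite inE BP /=; apply/subsetP => x xB.
  move/subsetP: Bsub => /(_ x xB) /imsetP [y _ xy].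
  have : y \in [set k | g1 k \in B] by rewrite inE -xy.
  move/(subsetP B'sub) => /imsetP [z _ yz].
  by apply/imsetP; exists z; rewrite ?inE //= xy yz.
- case=> B; rewrite inE => /andP [BP Bsub] ->.
  exists [set y | g1 y \in B]; last by apply/setP => z; rewrite !inE.
  rewrite inE; apply/andP; split.
  + apply/imsetP; exists B => //; rewrite inE BP /=.
    apply/subsetP => x /(subsetP Bsub) /imsetP [z _ ->].
    by apply/imsetP; exists (g2 z); rewrite ?inE.
  + apply/subsetP => y; rewrite inE => /(subsetP Bsub) /imsetP [z _ e].
    by apply/imsetP; exists z; rewrite ?inE // (ig1 _ _ e).
Qed.

Lemma ncP n (P : {set {set 'I_n}}) :
  reflect (forall A B, A \in P -> B \in P -> A != B ->
           forall a b c d, a \in A -> b \in A -> c \in B -> d \in B ->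
           ~~ [&& (a < c)%N, (c < b)%N & (b < d)%N]) (noncrossing P).
Proof.
apply: (iffP forallP) => [H A B AP BP AB a b c d aA bA cB dB|H A].
- move: (H A); rewrite AP /= => /forallP /(_ B); rewrite BP AB /=.
  move=> /forallP /(_ a); rewrite aA /= => /forallP /(_ b); rewrite bA /=.
  move=> /forallP /(_ c); rewrite cB /= => /forallP /(_ d); by rewrite dB.
- apply/implyP => AP; apply/forallP => B; apply/implyP => BP; apply/implyP => AB.
  apply/forallP => a; apply/implyP => aA; apply/forallP => b; apply/implyP => bA.
  apply/forallP => c; apply/implyP => cB; apply/forallP => d; apply/implyP => dB.
  exact: (H A B AP BP AB a b c d aA bA cB dB).
Qed.

Lemma refinesP n (P Q : {set {set 'I_n}}) :
  reflect (forall B, B \in P -> exists2 C, C \in Q & B \subset C) (refines P Q).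
Proof.
apply: (iffP forallP) => [H B BP|H B].
- by move: (H B); rewrite BP /= => /existsP [C /andP [CQ BC]]; exists C.
- apply/implyP => BP; have [C CQ BC] := H B BP.
  by apply/existsP; exists C; rewrite CQ.
Qed.

Lemma triv_eq (T : finType) (P : {set {set T}}) A B x :
  trivIset P -> A \in P -> B \in P -> x \in A -> x \in B -> A = B.
Proof.
move=> /trivIsetP tP AP BP xA xB; apply/eqP/negPn/negP => AB.
by have := disjointFr (tP A B AP BP AB) xA; rewrite xB.
Qed.

Definition push m n (g : 'I_m -> 'I_n) (X : {set {set 'I_m}}) : {set {set 'I_n}} :=
  [set [set g k | k in B] | B : {set 'I_m} in X].

Lemma nc_pull m n (g : 'I_m -> 'I_n) P : monog g -> noncrossing P ->
  noncrossing (pullg g P).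
Proof.
move=> mg /ncP H; apply/ncP => A' B' /imsetP [A + ->] /imsetP [B + ->].
rewrite !inE => /andP [AP _] /andP [BP _] AB.
have {}AB : A != B by apply: contraNneq AB => ->.
move=> a b c d; rewrite !inE => aA bA cB dB.
have := H A B AP BP AB _ _ _ _ aA bA cB dB.
by rewrite !mg.
Qed.

Lemma nc_push m n (g : 'I_m -> 'I_n) X : monog g -> noncrossing X ->
  noncrossing (push g X).
Proof.
move=> mg /ncP H; apply/ncP => A' B' /imsetP [A AX ->] /imsetP [B BX ->] AB.
have {}AB : A != B by apply: contraNneq AB => ->.
move=> a' b' c' d' /imsetP [a aA ->] /imsetP [b bA ->] /imsetP [c cB ->] /imsetP [d dB ->].
have := H A B AX BX AB _ _ _ _ aA bA cB dB.
by rewrite !mg.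
Qed.

Lemma nc_sub n (P Q : {set {set 'I_n}}) : P \subset Q -> noncrossing Q -> noncrossing P.
Proof.
move=> /subsetP PQ /ncP H; apply/ncP => A B AP BP; apply: H; exact: PQ.
Qed.

Lemma pull_push m n (g : 'I_m -> 'I_n) X : injective g -> pullg g (push g X) = X.
Proof.
move=> ig; apply/setP => Y; apply/imsetP/idP.
- case=> B; rewrite inE => /andP [/imsetP [A AX ->] _] ->.
  suff -> : [set k | g k \in [set g k0 | k0 in A]] = A by [].
  by apply/setP => k; rewrite inE mem_imset.
- move=> YX; exists [set g k | k in Y].
  + rewrite inE imset_f //=; apply/subsetP => x /imsetP [k _ ->].
    by rewrite imset_f ?inE.
  + by apply/setP => k; rewrite inE mem_imset.
Qed.

Lemma push_pull m n (g : 'I_m -> 'I_n) Q : injective g ->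
  push g (pullg g Q) = [set B in Q | B \subset [set g k | k in [set: 'I_m]]].
Proof.
move=> ig; apply/setP => Y; apply/imsetP/idP.
- case=> B' /imsetP [B + ->] ->; rewrite !inE => /andP [BQ Bsub].
  suff -> : [set g k | k in [set k | g k \in B]] = B by rewrite BQ.
  apply/setP => x; apply/imsetP/idP => [[k + ->]|xB]; first by rewrite inE.
  by case/imsetP: (subsetP Bsub x xB) => k _ e; subst x; exists k; rewrite ?inE.
- rewrite inE => /andP [YQ Ysub]; exists [set k | g k \in Y].
  + by apply/imsetP; exists Y; rewrite ?inE ?YQ.
  + apply/setP => x; apply/idP/imsetP => [xY|[k + ->]]; last by rewrite inE.
    by case/imsetP: (subsetP Ysub x xY) => k _ e; subst x; exists k; rewrite ?inE.
Qed.

Lemma pull_partition m n (g : 'I_m -> 'I_n) (Y : {set {set 'I_n}}) :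
  trivIset Y -> set0 \notin Y ->
  (forall k, exists2 B, B \in Y & (g k \in B) && (B \subset [set g k | k in [set: 'I_m]])) ->
  partition (pullg g Y) [set: 'I_m].
Proof.
move=> tY nY cov; rewrite /partition; apply/and3P; split.
- apply/eqP/setP => k; rewrite inE; apply/bigcupP.
  have [B BY /andP [kB Bsub]] := cov k.
  exists [set k | g k \in B]; last by rewrite inE.
  by apply/imsetP; exists B; rewrite ?inE ?BY.
- apply/trivIsetP => A' B' /imsetP [A + ->] /imsetP [B + ->].
  rewrite !inE => /andP [AY _] /andP [BY _] AB.
  rewrite -setI_eq0; apply/eqP/setP => k; rewrite !inE.
  apply/negbTE/negP => /andP [kA kB].
  by move: AB; rewrite (triv_eq tY AY BY kA kB) eqxx.
- apply/negP => /imsetP [B + e]; rewrite inE => /andP [BY Bsub].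
  have : B != set0 by apply: contraNneq nY => <-.
  case/set0Pn => x xB.
  case/imsetP: (subsetP Bsub x xB) => k _ ek; subst x.
  have : k \in [set k | g k \in B] by rewrite inE.
  by rewrite -e inE.
Qed.

Lemma push_partition m n (g : 'I_m -> 'I_n) (X : {set {set 'I_m}}) :
  injective g ->
  partition (push g X) [set g k | k in [set: 'I_m]] = partition X [set: 'I_m].
Proof. move=> ig; exact: imset_partition. Qed.

Definition refines_in n (P : {set {set 'I_n}}) (S : {set 'I_n}) (Q : {set {set 'I_n}}) :=
  [forall B in P, (B \subset S) ==> [exists C in Q, B \subset C]].

Lemma refines_inP n (P : {set {set 'I_n}}) (S : {set 'I_n}) (Q : {set {set 'I_n}}) :
  reflect (forall B, B \in P -> B \subset S -> exists2 C, C \in Q & B \subset C)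
    (refines_in P S Q).
Proof.
apply: (iffP forallP) => [H B BP BS|H B].
- by move: (H B); rewrite BP BS /= => /existsP [C /andP [CQ BC]]; exists C.
- apply/implyP => BP; apply/implyP => BS; have [C CQ BC] := H B BP BS.
  by apply/existsP; exists C; rewrite CQ.
Qed.

Lemma IR_cond m n (g : 'I_m -> 'I_n) (S : {set 'I_n}) P Qr : monog g ->
  [set g k | k in [set: 'I_m]] = S ->
  (NCpart (pullg g Qr) && refines (pullg g P) (pullg g Qr)) && (push g (pullg g Qr) == Qr)
  = [&& partition Qr S, noncrossing Qr & refines_in P S Qr].
Proof.
move=> mg gim; have ig := monog_inj mg.
rewrite push_pull // gim; apply/idP/idP.
- case/andP => /andP [/andP [pX ncX] rX] /eqP eQ.
  have eQ' : push g (pullg g Qr) = Qr by rewrite push_pull // gim eQ.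
  apply/and3P; split.
  + by rewrite -eQ' -gim push_partition.
  + by rewrite -eQ' nc_push.
  apply/refines_inP => B BP BS.
  have : [set k | g k \in B] \in pullg g P by apply/imsetP; exists B; rewrite ?inE ?BP ?gim.
  move/refinesP: rX => H /H [C' C'X BC'].
  exists [set g k | k in C']; first by rewrite -eQ' /push imset_f.
  apply/subsetP => x xB; have : x \in S := subsetP BS x xB.
  rewrite -gim => /imsetP [k _ ek]; subst x.
  by rewrite imset_f // (subsetP BC') // inE.
- case/and3P => pQ ncQ rQ.
  have QS : forall B, B \in Qr -> B \subset S by move=> B; exact: partitionS pQ.
  have -> : [set B in Qr | B \subset S] == Qr.
    by apply/eqP/setP => B; rewrite inE; case: (boolP (B \in Qr)) => // /QS ->.
  rewrite andbT; apply/andP; split; first (apply/andP; split).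
  + apply: pull_partition; first exact: partition_trivIset pQ.
      by rewrite (partition0 pQ).
    move=> k; have : g k \in cover Qr by rewrite (cover_partition pQ) -gim imset_f.
    by case/bigcupP => B BQ gkB; exists B; rewrite // gkB gim QS.
  + exact: nc_pull.
  + apply/refinesP => B' /imsetP [B + ->]; rewrite inE gim => /andP [BP BS].
    move/refines_inP: rQ => H; have [C CQ BC] := H B BP BS.
    exists [set k | g k \in C].
    * by apply/imsetP; exists C; rewrite // inE CQ gim QS.
    * by apply/subsetP => k; rewrite !inE => /(subsetP BC).
Qed.

Import GRing.Theory.
Local Open Scope ring_scope.

Lemma IR (K : fieldType) (b c : charB K) n (P : {set {set 'I_n}}) (S : {set 'I_n}) :
  convB b c (restrict P S) =
  \sum_(Qr : {set {set 'I_n}} | [&& partition Qr S, noncrossing Qr & refines_in P S Qr])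
     b #|S| (restrict Qr S) * \prod_(tau in Qr) c #|tau| (restrict P tau).
Proof.
set g := @enum_val _ (mem S).
have mg : monog g := monog_enum_val (A:=S).
have ig := monog_inj mg.
have gim : [set g k | k in [set: 'I_#|S|]] = S := enum_val_image S.
rewrite /convB (reindex_onto (fun Qr => restrict Qr S) (push g)) /=; last first.
  by move=> X _; rewrite restrictE pull_push.
apply: eq_big => Qr; first by rewrite !restrictE; exact: IR_cond.
move=> H; rewrite !restrictE (IR_cond _ _ mg gim) in H; case/and3P: H => pQ ncQ rQ.
congr (_ * _).
have eQ : Qr = push g (restrict Qr S).
  rewrite restrictE push_pull // gim; apply/setP => B; rewrite inE.
  by case: (boolP (B \in Qr)) => // BQ; rewrite (partitionS pQ BQ).
rewrite [in RHS]eQ /push [in RHS]big_imset /=; last by move=> A B _ _; exact: (imset_inj ig).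
apply: eq_bigr => tau' _.
rewrite !restrictE pull_comp //; apply: pull_canon.
  by move=> i j; rewrite /= !enum_val_mono.
- by move=> i j; rewrite /= !enum_val_mono.
  by rewrite [in RHS]enum_val_image (imset_comp g) enum_val_image.
Qed.

Lemma trivIset_eq (T : finType) (P : {set {set T}}) :
  (forall A B x, A \in P -> B \in P -> x \in A -> x \in B -> A = B) -> trivIset P.
Proof.
move=> H; apply/trivIsetP => A B AP BP AB.
rewrite -setI_eq0; apply/eqP/setP => x; rewrite !inE.
apply/negbTE/negP => /andP [xA xB].
by move: AB; rewrite (H A B x AP BP xA xB) eqxx.
Qed.

Definition blocks_in n (R Q : {set {set 'I_n}}) : {ffun {set 'I_n} -> {set {set 'I_n}}} :=
  [ffun rho => if rho \in R then [set tau in Q | tau \subset rho] else set0].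

Definition Dcond n (P : {set {set 'I_n}}) (rho : {set 'I_n}) (Qr : {set {set 'I_n}}) : bool :=
  [&& partition Qr rho, noncrossing Qr & refines_in P rho Qr].

Lemma OB_inv n (P R : {set {set 'I_n}}) (f : {ffun {set 'I_n} -> {set {set 'I_n}}}) :
  partition R [set: 'I_n] ->
  f \in pfamily set0 (mem R) (Dcond P) ->
  blocks_in R (\bigcup_(rho in R) f rho) = f.
Proof.
move=> pR /pfamilyP [supp Df]; apply/ffunP => rho; rewrite ffunE.
case: ifP => rhoR; last first.
  apply/esym/eqP; apply: contraFT rhoR => nz.
  by apply: (subsetP supp); rewrite inE.
have /and3P [pf _ _] := Df rho rhoR.
apply/setP => tau; rewrite inE; apply/andP/idP.
- case=> /bigcupP [rho' rho'R taurho'] taurho.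
  have /and3P [pf' _ _] := Df rho' rho'R.
  have : tau != set0 by apply: contraTneq taurho' => ->; rewrite (partition0 pf').
  case/set0Pn => x xtau.
  have e : rho = rho'.
    apply: (triv_eq (partition_trivIset pR) rhoR rho'R (x := x)).
      exact: subsetP taurho x xtau.
    exact: subsetP (partitionS pf' taurho') x xtau.
  by rewrite e.
- move=> taurho; split; first by apply/bigcupP; exists rho.
  exact: partitionS pf taurho.
Qed.

Lemma OB_cond n (P R Q : {set {set 'I_n}}) :
  set0 \notin P -> NCpart R -> refines P R ->
  (blocks_in R Q \in pfamily set0 (mem R) (Dcond P)) &&
    (\bigcup_(rho in R) blocks_in R Q rho == Q)
  = [&& NCpart Q, refines P Q & refines Q R].
Proof.
move=> nP /andP [pR ncR] rPR.
have tR := partition_trivIset pR.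
apply/idP/idP.
- case/andP => /pfamilyP [_ Df] /eqP eU.
  have Df' : forall rho, rho \in R ->
      Dcond P rho [set tau in Q | tau \subset rho].
    by move=> rho rhoR; have := Df rho rhoR; rewrite ffunE rhoR.
  have inQ : forall tau, tau \in Q -> exists2 rho, rho \in R & tau \subset rho.
    move=> tau; rewrite -{1}eU => /bigcupP [rho rhoR]; rewrite ffunE rhoR inE.
    by case/andP => _ h; exists rho.
  have Qin : forall tau rho, rho \in R -> tau \in Q -> tau \subset rho ->
      tau \in [set tau in Q | tau \subset rho] by move=> tau rho _ tQ ts; rewrite inE tQ.
  have n0Q : set0 \notin Q.
    apply/negP => /[dup] /inQ [rho rhoR _] => s0.
    have /and3P [p _ _] := Df' rho rhoR.
    by move: (partition0 p); rewrite inE s0 sub0set.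
  have eqQ : forall A B x, A \in Q -> B \in Q -> x \in A -> x \in B -> A = B.
    move=> A B x AQ BQ xA xB.
    have [rA rAR ArA] := inQ A AQ; have [rB rBR BrB] := inQ B BQ.
    have e : rA = rB.
      exact: (triv_eq tR rAR rBR (subsetP ArA x xA) (subsetP BrB x xB)).
    subst rB; have /and3P [p _ _] := Df' rA rAR.
    exact: (triv_eq (partition_trivIset p) (Qin _ _ rAR AQ ArA) (Qin _ _ rAR BQ BrB) xA xB).
  apply/and3P; split.
  + apply/andP; split.
    * rewrite /partition n0Q (trivIset_eq eqQ) andbT.
      rewrite andbT; apply/eqP/setP => x; rewrite inE.
      have : x \in cover R by rewrite (cover_partition pR) inE.
      case/bigcupP => rho rhoR xrho.
      have /and3P [p _ _] := Df' rho rhoR.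
      move: xrho; rewrite -(cover_partition p) => /bigcupP [tau].
      rewrite inE => /andP [tQ _] xt; apply/bigcupP; by exists tau.
    * apply/ncP => A B AQ BQ AB a b c d aA bA cB dB.
      have [rA rAR ArA] := inQ A AQ; have [rB rBR BrB] := inQ B BQ.
      case: (eqVneq rA rB) => [e|ne].
      - subst rB; have /and3P [_ nc _] := Df' rA rAR.
        move/ncP: nc => H; exact: (H A B (Qin _ _ rAR AQ ArA) (Qin _ _ rAR BQ BrB) AB a b c d aA bA cB dB).
      - move/ncP: ncR => H; exact: (H rA rB rAR rBR ne a b c d (subsetP ArA a aA) (subsetP ArA b bA) (subsetP BrB c cB) (subsetP BrB d dB)).
  + apply/refinesP => B BP.
    move/refinesP: rPR => /(_ B BP) [rho rhoR Brho].
    have /and3P [_ _ /refines_inP rin] := Df' rho rhoR.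
    have [C + BC] := rin B BP Brho; rewrite inE => /andP [CQ _].
    by exists C.
  + apply/refinesP => tau /inQ [rho rhoR ts]; by exists rho.
- case/and3P => /andP [pQ ncQ] /refinesP rPQ /refinesP rQR.
  apply/andP; split.
  + apply/pfamilyP; split.
      apply/subsetP => rho; rewrite inE ffunE; by case: ifP; rewrite ?eqxx.
    move=> rho rhoR; rewrite ffunE rhoR /Dcond.
    apply/and3P; split.
    * rewrite /partition; apply/and3P; split.
      - apply/eqP/setP => x; apply/bigcupP/idP.
          by case=> tau; rewrite inE => /andP [_ ts] /(subsetP ts).
        move=> xrho.
        have : x \in cover Q by rewrite (cover_partition pQ) inE.
        case/bigcupP => tau tQ xt; exists tau => //.
        rewrite inE tQ /=.
        have [rho' rho'R ts] := rQR tau tQ.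
        by rewrite (triv_eq tR rhoR rho'R xrho (subsetP ts x xt)).
      - apply: trivIsetS (partition_trivIset pQ).
        by apply/subsetP => tau; rewrite inE => /andP [].
      - by rewrite inE (partition0 pQ).
    * by apply: nc_sub ncQ; apply/subsetP => tau; rewrite inE => /andP [].
    * apply/refines_inP => B BP Brho.
      have [C CQ BC] := rPQ B BP.
      have [rho' rho'R Crho'] := rQR C CQ.
      have : B != set0 by apply: contraNneq nP => <-.
      case/set0Pn => x xB.
      have e : rho = rho'.
        exact: (triv_eq tR rhoR rho'R (subsetP Brho x xB) (subsetP Crho' x (subsetP BC x xB))).
      by exists C; rewrite // inE CQ e.
  + apply/eqP/setP => tau; apply/bigcupP/idP.
      by case=> rho rhoR; rewrite ffunE rhoR inE => /andP [].
    move=> tQ; have [rho rhoR ts] := rQR tau tQ.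
    by exists rho; rewrite // ffunE rhoR inE tQ.
Qed.

Lemma OB (K : fieldType) n (P R : {set {set 'I_n}}) (F : {set 'I_n} -> {set {set 'I_n}} -> K) :
  set0 \notin P -> NCpart R -> refines P R ->
  \prod_(rho in R) \sum_(Qr | [&& partition Qr rho, noncrossing Qr & refines_in P rho Qr]) F rho Qr =
  \sum_(Q | [&& NCpart Q, refines P Q & refines Q R])
     \prod_(rho in R) F rho [set tau in Q | tau \subset rho].
Proof.
move=> nP ncR rPR.
rewrite (big_distr_big_dep set0) /=.
rewrite (reindex_onto (blocks_in R) (fun f => \bigcup_(rho in R) f rho)) /=; last first.
  by move=> f; apply: OB_inv; case/andP: ncR.
apply: eq_big => Q; first exact: OB_cond.
by move=> _; apply: eq_bigr => rho rhoR; rewrite ffunE rhoR.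
Qed.

Lemma refines_trans n (P Q R : {set {set 'I_n}}) :
  refines P Q -> refines Q R -> refines P R.
Proof.
move=> /refinesP h1 /refinesP h2; apply/refinesP => B /h1 [C /h2 [D DR CD] BC].
by exists D; rewrite // (subset_trans BC CD).
Qed.

Lemma restrict_sub n (Q : {set {set 'I_n}}) (rho : {set 'I_n}) :
  restrict [set tau in Q | tau \subset rho] rho = restrict Q rho.
Proof.
rewrite /restrict.
suff -> : [set B in [set tau in Q | tau \subset rho] | B \subset rho] = [set B in Q | B \subset rho] by [].
by apply/setP => B; rewrite !inE -andbA andbb.
Qed.

Lemma prod_blocks (K : fieldType) n (Q R : {set {set 'I_n}}) (G : {set 'I_n} -> K) :
  partition Q [set: 'I_n] -> partition R [set: 'I_n] -> refines Q R ->
  \prod_(rho in R) \prod_(tau in [set tau in Q | tau \subset rho]) G tau =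
  \prod_(tau in Q) G tau.
Proof.
move=> pQ pR /refinesP rQR.
symmetry.
rewrite (eq_bigr (fun tau : {set 'I_n} => \prod_(rho | (rho \in R) && (tau \subset rho)) G tau)); last first.
  move=> tau tQ; have [rho0 rho0R t0] := rQR tau tQ.
  rewrite (big_pred1 rho0) // => rho /=; apply/andP/eqP => [[rhoR trho]|->]; last by [].
  have : tau != set0 by apply: contraTneq tQ => ->; rewrite (partition0 pQ).
  case/set0Pn => x xt.
  exact: (triv_eq (partition_trivIset pR) rhoR rho0R (subsetP trho x xt) (subsetP t0 x xt)).
rewrite (exchange_big_dep (fun rho => rho \in R)) /=; last by move=> ? ? _ /andP [].
by apply: eq_bigr => rho rhoR; apply: eq_bigl => tau; rewrite inE rhoR.
Qed.

Lemma assoc (K : fieldType) (a b c : charB K) n (P : {set {set 'I_n}}) :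
  partition P [set: 'I_n] ->
  convB (convB a b) c P = convB a (convB b c) P.
Proof.
move=> pP; have nP : set0 \notin P by rewrite (partition0 pP).
transitivity (\sum_(R | NCpart R && refines P R)
   \sum_(Q | [&& NCpart Q, refines P Q & refines Q R])
      a n R * ((\prod_(rho in R) b #|rho| (restrict Q rho)) *
               \prod_(tau in Q) c #|tau| (restrict P tau))).
  rewrite /convB.
  under eq_bigr do rewrite big_distrl.
  rewrite (exchange_big_dep (fun R => NCpart R && refines P R)) /=; last first.
    move=> Q R /andP [_ h1] /andP [-> h2]; by rewrite (refines_trans h1 h2).
  apply: eq_bigr => R /andP [ncR _]; apply: eq_big => Q.
    by rewrite ncR /= -!andbA.
  by move=> _; rewrite mulrA.
have -> : convB a (convB b c) P = \sum_(R | NCpart R && refines P R)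
   a n R * \prod_(rho in R) convB b c (restrict P rho) by [].
apply: eq_bigr => R /andP [ncR rPR]; rewrite -mulr_sumr; congr (_ * _).
under eq_bigr do rewrite IR.
rewrite OB //; apply: eq_bigr => Q /and3P [/andP [pQ _] _ rQR].
rewrite big_split /=; congr (_ * _).
  by apply: eq_bigr => rho _; rewrite restrict_sub.
by symmetry; apply: prod_blocks => //; case/andP: ncR.
Qed.

Lemma pull_id n (P : {set {set 'I_n}}) : pullg id P = P.
Proof.
apply/setP => Y; apply/imsetP/idP.
- case=> B; rewrite inE => /andP [BP _] ->.
  by have -> : [set k | id k \in B] = B by apply/setP => k; rewrite inE.
- move=> YP; exists Y; last by apply/setP => k; rewrite inE.
  by rewrite inE YP; apply/subsetP => x _; apply/imsetP; exists x; rewrite ?inE.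
Qed.

Lemma transport (T : Type) (c : forall n, {set {set 'I_n}} -> T) n (P : {set {set 'I_n}}) :
  c #|[set: 'I_n]| (restrict P [set: 'I_n]) = c n P.
Proof.
rewrite restrictE -{2}(pull_id P); apply: pull_canon.
- by move=> i j; rewrite enum_val_mono.
- by [].
- rewrite enum_val_image; apply/setP => x; rewrite inE; apply/esym/imsetP.
  by exists x; rewrite ?inE.
Qed.

Lemma top_NC n : (0 < n)%N -> NCpart [set [set: 'I_n]].
Proof.
move=> n0; apply/andP; split.
- rewrite /partition cover1 eqxx trivIset1 /= inE; apply/eqP => /setP /(_ (Ordinal n0)).
  by rewrite !inE.
- by apply/ncP => A B; rewrite !inE => /eqP -> /eqP ->; rewrite eqxx.
Qed.

Lemma refines_top n (P : {set {set 'I_n}}) : refines P [set [set: 'I_n]].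
Proof. by apply/refinesP => B _; exists [set: 'I_n]; rewrite ?inE ?subsetT. Qed.

Lemma top_unique n (Q : {set {set 'I_n}}) : partition Q [set: 'I_n] ->
  [set: 'I_n] \in Q -> Q = [set [set: 'I_n]].
Proof.
move=> pQ TQ; apply/setP => C; rewrite inE; apply/idP/eqP => [CQ|->//].
have : C != set0 by apply: contraTneq CQ => ->; rewrite (partition0 pQ).
case/set0Pn => x xC.
exact: (triv_eq (partition_trivIset pQ) CQ TQ xC (in_setT x)).
Qed.

Lemma small_blocks n (Q : {set {set 'I_n}}) tau : partition Q [set: 'I_n] ->
  Q != [set [set: 'I_n]] -> tau \in Q -> (0 < #|tau| < n)%N.
Proof.
move=> pQ QT tQ; apply/andP; split.
  rewrite card_gt0; apply: contraTneq tQ => ->; by rewrite (partition0 pQ).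
have le : (#|tau| <= n)%N by rewrite -[X in (_ <= X)%N](card_ord n) max_card.
rewrite ltn_neqAle le andbT; apply: contra QT => /eqP e.
have et : tau = [set: 'I_n].
  apply/eqP; rewrite eqEcard subsetT cardsT card_ord. by rewrite /= -[X in (X <= _)%N]e.
by apply/eqP; apply: top_unique; rewrite // -et.
Qed.

Lemma restrict_NC n (P Q : {set {set 'I_n}}) tau :
  NCpart P -> partition Q [set: 'I_n] -> refines P Q -> tau \in Q ->
  NCpart (restrict P tau).
Proof.
move=> /andP [pP ncP] pQ /refinesP rPQ tQ.
rewrite restrictE; apply/andP; split; last first.
  by apply: nc_pull => // i j; rewrite enum_val_mono.
apply: pull_partition; first exact: partition_trivIset pP.
  by rewrite (partition0 pP).
move=> k; rewrite enum_val_image.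
have : enum_val k \in cover P by rewrite (cover_partition pP) inE.
case/bigcupP => B BP xB; exists B; rewrite // xB /=.
have [C CQ BC] := rPQ B BP.
have e : C = tau.
  exact: (triv_eq (partition_trivIset pQ) CQ tQ (subsetP BC _ xB) (enum_valP k)).
by rewrite -e.
Qed.

Lemma left_unit (K : fieldType) (X : charB K) n (P : {set {set 'I_n}}) :
  (0 < n)%N -> convB (@epsB K) X P = X n P.
Proof.
move=> n0; rewrite /convB (bigD1 [set [set: 'I_n]]) /=; last by rewrite top_NC // refines_top.
rewrite [Y in _ + Y]big1 ?addr0.
  by rewrite /epsB cards1 eqxx mul1r big_set1 transport.
move=> Q /andP [/andP [/andP [pQ _] _] QT]; rewrite /epsB.
case: ifP => [/cards1P [C eQ]|]; last by rewrite mul0r.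
have eC : C = [set: 'I_n] by rewrite -(cover_partition pQ) eQ cover1.
by move: QT; rewrite eQ eC eqxx.
Qed.

Lemma card_restrict n (P : {set {set 'I_n}}) (tau : {set 'I_n}) :
  #|restrict P tau| = #|[set B in P | B \subset tau]|.
Proof.
rewrite /restrict card_in_imset // => B1 B2; rewrite !inE => /andP [_ s1] /andP [_ s2] e.
apply/setP => x; apply/idP/idP => xB.
- have xt := subsetP s1 x xB.
  move/setP: e => /(_ (enum_rank_in xt x)); rewrite !inE enum_rankK_in //.
  by rewrite xB => <-.
- have xt := subsetP s2 x xB.
  move/setP: e => /(_ (enum_rank_in xt x)); rewrite !inE enum_rankK_in //.
  by rewrite xB => ->.
Qed.

Lemma restrict_self n (P : {set {set 'I_n}}) tau : partition P [set: 'I_n] ->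
  tau \in P -> #|restrict P tau| = 1%N.
Proof.
move=> pP tP; rewrite card_restrict.
suff -> : [set B in P | B \subset tau] = [set tau] by rewrite cards1.
apply/setP => B; rewrite !inE; apply/andP/eqP => [[BP Bt]|->]; last by rewrite tP subxx.
have : B != set0 by apply: contraTneq BP => ->; rewrite (partition0 pP).
case/set0Pn => x xB.
exact: (triv_eq (partition_trivIset pP) BP tP xB (subsetP Bt x xB)).
Qed.

Lemma exists_bad n (P Q : {set {set 'I_n}}) :
  partition P [set: 'I_n] -> partition Q [set: 'I_n] -> refines P Q -> Q != P ->
  exists2 tau, tau \in Q & #|restrict P tau| != 1%N.
Proof.
move=> pP pQ /refinesP rPQ QP.
have H : forall tau, tau \in Q -> #|restrict P tau| = 1%N -> tau \in P.
  move=> tau tQ; rewrite card_restrict => /eqP/cards1P [B0 e].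
  have : B0 \in [set B in P | B \subset tau] by rewrite e inE.
  rewrite inE => /andP [B0P B0t].
  suff -> : tau = B0 by [].
  apply/eqP; rewrite eqEsubset B0t andbT; apply/subsetP => x xt.
  have : x \in cover P by rewrite (cover_partition pP) inE.
  case/bigcupP => B BP xB.
  have [C CQ BC] := rPQ B BP.
  have eC : C = tau by exact: (triv_eq (partition_trivIset pQ) CQ tQ (subsetP BC x xB) xt).
  have : B \in [set B in P | B \subset tau] by rewrite inE BP -eC.
  by rewrite e inE => /eqP <-.
case: (boolP [forall tau in Q, #|restrict P tau| == 1%N]) => [/forallP all1|].
  exfalso; move: QP; rewrite eqEsubset => /negP; apply; apply/andP; split.
    by apply/subsetP => tau tQ; apply: H => //; apply/eqP; move: (all1 tau); rewrite tQ.
  apply/subsetP => B BP; have [C CQ BC] := rPQ B BP.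
  have CP : C \in P by apply: H => //; apply/eqP; move: (all1 C); rewrite CQ.
  have : B != set0 by apply: contraTneq BP => ->; rewrite (partition0 pP).
  case/set0Pn => x xB.
  by rewrite (triv_eq (partition_trivIset pP) BP CP xB (subsetP BC x xB)).
move/forallPn => [tau]; rewrite negb_imply => /andP [tQ ne]; by exists tau.
Qed.

Lemma right_unit (K : fieldType) (X : charB K) n (P : {set {set 'I_n}}) :
  NCpart P -> convB X (@epsB K) P = X n P.
Proof.
move=> ncP; have pP : partition P [set: 'I_n] by case/andP: ncP.
have rPP : refines P P by apply/refinesP => B BP; exists B.
rewrite /convB (bigD1 P) /=; last by rewrite ncP rPP.
rewrite [Y in _ + Y]big1 ?addr0.
  rewrite big1 ?mulr1 // => tau tP.
  by rewrite /epsB restrict_self ?eqxx.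
move=> Q /andP [/andP [/andP [pQ _] rPQ] QP].
have [tau tQ ne] := exists_bad pP pQ rPQ QP.
by rewrite (bigD1 tau) //= /epsB (negbTE ne) mul0r mulr0.
Qed.

Lemma conv_congr_l (K : fieldType) (X X' Y : charB K) :
  eqB X X' -> eqB (convB X Y) (convB X' Y).
Proof.
move=> H n P n0 ncP; rewrite /convB; apply: eq_bigr => Q /andP [ncQ _].
by rewrite H.
Qed.

Lemma conv_congr_r (K : fieldType) (X Y Y' : charB K) :
  eqB Y Y' -> eqB (convB X Y) (convB X Y').
Proof.
move=> H n P n0 ncP; rewrite /convB; apply: eq_bigr => Q /andP [ncQ rPQ].
congr (_ * _); apply: eq_bigr => tau tQ; apply: H.
  have pQ : partition Q [set: 'I_n] by case/andP: ncQ.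
  rewrite card_gt0; apply: contraTneq tQ => ->; by rewrite (partition0 pQ).
by apply: restrict_NC rPQ tQ => //; case/andP: ncQ.
Qed.

Lemma conv_split (K : fieldType) (phi X : charB K) n (P : {set {set 'I_n}}) :
  (0 < n)%N ->
  convB phi X P = phi n [set [set: 'I_n]] * X n P +
    \sum_(Q | NCpart Q && refines P Q && (Q != [set [set: 'I_n]]))
       phi n Q * \prod_(tau in Q) X #|tau| (restrict P tau).
Proof.
move=> n0; rewrite /convB (bigD1 [set [set: 'I_n]]) /= ?top_NC ?refines_top //.
by rewrite big_set1 transport.
Qed.

Lemma conv_inj (K : fieldType) (phi X Y : charB K) :
  (forall n, (0 < n)%N -> phi n [set [set: 'I_n]] != 0) ->
  eqB (convB phi X) (convB phi Y) -> eqB X Y.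
Proof.
move=> nz H n; elim/ltn_ind: n => n IH P n0 ncP.
have := H n P n0 ncP; rewrite !conv_split //.
have -> : \sum_(Q | NCpart Q && refines P Q && (Q != [set [set: 'I_n]]))
       phi n Q * \prod_(tau in Q) X #|tau| (restrict P tau) =
   \sum_(Q | NCpart Q && refines P Q && (Q != [set [set: 'I_n]]))
       phi n Q * \prod_(tau in Q) Y #|tau| (restrict P tau).
  apply: eq_bigr => Q /andP [/andP [ncQ rPQ] QT]; congr (_ * _).
  apply: eq_bigr => tau tQ.
  have pQ : partition Q [set: 'I_n] by case/andP: ncQ.
  have /andP [t0 tn] := small_blocks pQ QT tQ.
  apply: IH => //; exact: restrict_NC rPQ tQ.
by move/addIr/(mulfI (nz n n0)).
Qed.

Fixpoint Rf (K : fieldType) (phi : charB K) (f : nat) : charB K :=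
  match f with
  | 0 => fun _ _ => 0
  | f'.+1 => fun n P =>
      (@epsB K n P - \sum_(Q | NCpart Q && refines P Q && (Q != [set [set: 'I_n]]))
          phi n Q * \prod_(tau in Q) Rf phi f' (restrict P tau)) / phi n [set [set: 'I_n]]
  end.

Lemma Rf_fuel (K : fieldType) (phi : charB K) f f' n (P : {set {set 'I_n}}) :
  (n < f)%N -> (n < f')%N -> Rf phi f P = Rf phi f' P.
Proof.
elim: f f' n P => [|g IH] [|g'] n P //= hf hf'.
congr ((_ - _) / _); apply: eq_bigr => Q /andP [/andP [ncQ _] QT]; congr (_ * _).
apply: eq_bigr => tau tQ.
have pQ : partition Q [set: 'I_n] by case/andP: ncQ.
have /andP [_ tn] := small_blocks pQ QT tQ.
apply: IH; exact: leq_trans tn _.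
Qed.

Lemma right_inv (K : fieldType) (phi : charB K) :
  (forall n, (0 < n)%N -> phi n [set [set: 'I_n]] != 0) ->
  eqB (convB phi (fun n P => Rf phi n.+1 P)) (@epsB K).
Proof.
move=> nz n P n0 ncP; rewrite conv_split //=.
rewrite [S in _ - S](eq_bigr (fun Q : {set {set 'I_n}} =>
    phi n Q * \prod_(tau in Q) Rf phi #|tau|.+1 (restrict P tau))).
  by rewrite mulrC divfK ?nz // subrK.
move=> Q /andP [/andP [ncQ _] QT]; congr (_ * _).
apply: eq_bigr => tau tQ.
have pQ : partition Q [set: 'I_n] by case/andP: ncQ.
have /andP [_ tn] := small_blocks pQ QT tQ.
exact: Rf_fuel.
Qed.

Unset Implicit Arguments.
Set Strict Implicit.
Set Printing Implicit Defensive.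

Theorem mainTheorem9 (K : fieldType) (charK0 : [pchar K] =i pred0) (phi : charB K) :
  invertibleB phi <-> (forall n : nat, (0 < n)%N -> phi n [set [set: 'I_n]] != 0).
Proof.
split.
- case=> psi [H1 _] n n0.
  have := H1 n [set [set: 'I_n]] n0 (top_NC n0).
  rewrite conv_split // big1; last first.
    move=> Q /andP [/andP [/andP [pQ _] /refinesP rTQ] QT].
    have [C CQ TC] := rTQ [set: 'I_n] (set11 _).
    have eC : C = [set: 'I_n] by apply/eqP; rewrite eqEsubset subsetT.
    by move: QT; rewrite (top_unique pQ) ?eqxx // -eC.
  rewrite addr0 /epsB cards1 eqxx => e.
  by apply/eqP => z; move: e; rewrite z mul0r => /eqP; rewrite eq_sym oner_eq0.
- move=> nz; exists (fun n P => Rf phi n.+1 P); split; first exact: right_inv.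
  apply: (conv_inj nz) => n P n0 ncP.
  have pP : partition P [set: 'I_n] by case/andP: ncP.
  rewrite -assoc // (conv_congr_l _ (right_inv nz)) // left_unit //.
  by rewrite right_unit.
Qed.
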